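(* For all positive integers $n,k$, $$WS^+(n+k) \geq S^+(k+1)\,WS^+(n).$$
   Context: A set $A \subseteq \mathbb{N}$ is sum-free if for all $(a,b)\in A^2$ (allowing $a=b$), $a+b \notin A$; it is weakly sum-free if for all $(a,b)\in A^2$ with $a\neq b$, $a+b\notin A$. An S-template with $m$ colors and width $p$ is a partition of $\{1,\dots,p\}$ into $m$ sum-free subsets $A_1,\dots,A_m$ such that for every $i\in\{1,\dots,m-1\}$ and all $(x,y)\in A_i^2$, $x+y>p$ implies $x+y-p\notin A_i$; $S^+(m)$ is the greatest width of an S-template with $m$ colors. For positive integers $a>b$, let $\pi(x) = (x \bmod a) + a\cdot \mathbb{1}_{\{0,\dots,b\}}(x \bmod a)$. For positive integers $a,m,b$ with $a>b$, a partition $(A_1,\dots,A_m)$ of $\{1,\dots,a+b\}$ is a $b$-WS-template with width $a$ and $m$ colors if: (i) every $A_i$ is weakly sum-free; (ii) every $A_i\setminus\{1,\dots,b\}$ is sum-free; (iii) for all $(x,y)\in A_m^2$, $x+y>b+2a$ implies $x+y-2a\notin A_m$; (iv) for all $i\in\{1,\dots,m-1\}$ and $(x,y)\in A_i^2$, $x+y>a+b$ implies $\pi(x+y)\notin A_i$. $WS^+_b(m)$ is the largest $a$ such that a $b$-WS-template with width $a$ and $m$ colors exists ($0$ if none), and $WS^+(m)=\max_{b\in\mathbb{N}^*} WS^+_b(m)$. *)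

(* Defs.v *)
From mathcomp Require Import all_boot.
From Stdlib Require Import ClassicalEpsilon.
Set Implicit Arguments. Unset Strict Implicit. Unset Printing Implicit Defensive.

(* A partition (A_1,...,A_m) of {1,...,N} is represented by a colouring
   f : nat -> nat with 1 <= f x <= m for x in {1..N}; A_i = {x in [1,N] | f x = i}. *)
Definition is_coloring (m N : nat) (f : nat -> nat) : Prop :=
  forall x, 1 <= x <= N -> 1 <= f x <= m.

Definition S_template (m p : nat) (f : nat -> nat) : Prop :=
  [/\ is_coloring m p f,
      (forall x y, 1 <= x <= p -> 1 <= y <= p -> f x = f y -> x + y <= p ->
         f (x + y) <> f x)
    &
      (forall x y, 1 <= x <= p -> 1 <= y <= p -> f x = f y -> f x < m ->
         p < x + y -> f (x + y - p) <> f x)].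

Definition piab (a b x : nat) : nat := x %% a + (if x %% a <= b then a else 0).

Definition WS_template (b m a : nat) (f : nat -> nat) : Prop :=
  [/\ 0 < a, 0 < b, 0 < m, b < a & is_coloring m (a + b) f] /\
  [/\
      (forall x y, 1 <= x <= a + b -> 1 <= y <= a + b -> x <> y -> f x = f y ->
         x + y <= a + b -> f (x + y) <> f x),
      (forall x y, b < x <= a + b -> b < y <= a + b -> f x = f y ->
         x + y <= a + b -> f (x + y) <> f x),
      (forall x y, 1 <= x <= a + b -> 1 <= y <= a + b -> f x = m -> f y = m ->
         b + 2 * a < x + y -> f (x + y - 2 * a) <> m)
    &
      (forall x y, 1 <= x <= a + b -> 1 <= y <= a + b -> f x = f y -> f x < m ->
         a + b < x + y -> f (piab a b (x + y)) <> f x)].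

(* The greatest natural number satisfying P, or 0 if there is none
   (classical definition). *)
Definition greatest (P : nat -> Prop) : nat :=
  match excluded_middle_informative (exists s, P s /\ forall q, P q -> q <= s) with
  | left H => proj1_sig (constructive_indefinite_description _ H)
  | right _ => 0
  end.

Definition S_plus (m : nat) : nat := greatest (fun p => exists f, S_template m p f).

Definition WS_plus_b (b m : nat) : nat :=
  greatest (fun a => exists f, WS_template b m a f).

Definition WS_plus (m : nat) : nat :=
  greatest (fun v => exists2 b, 0 < b & v = WS_plus_b b m).

(* Main.v *)
Require Import Defs.
From mathcomp Require Import all_boot.
From mathcomp Require Import zify.
From Stdlib Require Import Classical ClassicalEpsilon.

Lemma greatest_0 (P : nat -> Prop) :
  greatest P = 0 \/ (P (greatest P) /\ forall q, P q -> q <= greatest P).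
Proof.
rewrite /greatest; case: excluded_middle_informative => [H|_]; last by left.
right; by case: (constructive_indefinite_description _ H).
Qed.

Lemma bounded_max (P : nat -> Prop) B : (exists q, P q) -> (forall q, P q -> q <= B) ->
  exists s, P s /\ forall q, P q -> q <= s.
Proof.
elim: B => [|B IH] [q Pq] HB.
  exists q; split => // q' Pq'; have := HB _ Pq; have := HB _ Pq'; lia.
case: (classic (P B.+1)) => HP.
  by exists B.+1; split.
apply: IH; first by exists q.
move=> q' Pq'; have := HB _ Pq'; rewrite leq_eqVlt => /orP [/eqP E|//].
by rewrite E in Pq'.
Qed.

Lemma greatest_ge (P : nat -> Prop) B q : P q -> (forall q, P q -> q <= B) -> q <= greatest P.
Proof.
move=> Pq HB; have [s [Ps Hs]] := @bounded_max P B (ex_intro P q Pq) HB.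
rewrite /greatest; case: excluded_middle_informative => [H|H].
  case: (constructive_indefinite_description _ H) => t [_ Ht] /=; exact: Ht.
exfalso; apply: H; by exists s.
Qed.

Lemma php (col : nat -> nat) r : forall m W, (forall u, u \in W -> 1 <= col u <= m) ->
  m * r < size W -> exists c, 1 <= c <= m /\ r < count (fun u => col u == c) W.
Proof.
elim=> [|m IH] W HW.
  case: W HW => [//|u W] HW _; have := HW u (mem_head _ _); lia.
move=> Hs.
case: (leqP (count (fun u => col u == m.+1) W) r) => Hc; last first.
  exists m.+1; split => //; lia.
have HW' : forall u, u \in [seq u <- W | col u != m.+1] -> 1 <= col u <= m.
  move=> u; rewrite mem_filter => /andP [H1 H2]; have := HW u H2; lia.
have Hs' : m * r < size [seq u <- W | col u != m.+1].
  rewrite size_filter.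
  have := count_predC (fun u => col u == m.+1) W.
  have -> : count (predC (fun u => col u == m.+1)) W = count (fun u => col u != m.+1) W by apply: eq_count.
  rewrite mulSn in Hs. move=> Hcp. rewrite -Hcp in Hs. lia.
have [c [Hc1 Hc2]] := IH _ HW' Hs'.
exists c; split; first lia.
apply: (leq_trans Hc2); rewrite count_filter.
apply: sub_count => u /=; by case/andP.
Qed.

Fixpoint hh (m j : nat) : nat := match j with 0 => 1 | j'.+1 => m * hh m j' + 1 end.

Lemma hh_pos m j : 0 < hh m j.
Proof. by case: j => //= j; rewrite addn1. Qed.

Lemma seq_min (V : seq nat) : V != [::] -> exists v, v \in V /\ forall u, u \in V -> v <= u.
Proof.
elim: V => [//|x s IH] _.
case: s IH => [|y s] IH.
  exists x; split; first exact: mem_head. by move=> u; rewrite inE => /eqP ->.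
have [v [Hv Hm]] := IH isT.
exists (minn x v); split.
  rewrite /minn; case: ifP => _; first exact: mem_head. by rewrite inE Hv orbT.
move=> u; rewrite inE => /orP [/eqP ->|/Hm]; lia.
Qed.


Lemma chain_step m N (col : nat -> nat) (V : seq nat) h :
  (forall x, 1 <= x <= N -> 1 <= col x <= m) ->
  uniq V -> (forall u, u \in V -> u <= N) -> m * h + 1 < size V ->
  exists c V' v, [/\ 1 <= c <= m, uniq V', (forall u, u \in V' -> u \in V), h < size V'
    & v \in V] /\ forall u, u \in V' -> v < u /\ col (u - v) = c.
Proof.
move=> Hcol HV HVN Hs.
have HV0 : V != [::] by case: V Hs HV HVN.
have [v [Hv Hm]] := @seq_min V HV0.
have HW : forall u, u \in rem v V -> u \in V /\ v < u.
  move=> u; rewrite (mem_rem_uniq _ HV) inE => /andP [H1 H2].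
  split => //; have := Hm _ H2; move: H1; rewrite ltn_neqAle eq_sym => -> //.
have P1 : forall u, u \in rem v V -> 1 <= col (u - v) <= m.
  move=> u /HW [H1 H2]; apply: Hcol; have := HVN _ H1; lia.
have P2 : m * h < size (rem v V).
  rewrite size_rem //; move: Hs; rewrite addn1 => Hs; rewrite -ltnS prednK //; exact: leq_ltn_trans Hs.
have [c [Hc1 Hc2]] := @php _ _ _ _ P1 P2.
exists c, [seq u <- rem v V | col (u - v) == c], v; split; first split => //.
- by rewrite filter_uniq // rem_uniq.
- by move=> u; rewrite mem_filter => /andP [_ /HW []].
- by rewrite size_filter.
- move=> u; rewrite mem_filter => /andP [/eqP H1 /HW [_ H2]]; by [].
Qed.

Lemma repeat_contra N (col : nat -> nat) c w v (V V' : seq nat) :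
  (forall x y, 1 <= x <= N -> 1 <= y <= N -> x <> y -> col x = col y -> x + y <= N ->
     col (x + y) <> col x) ->
  (forall u, u \in V -> u <= N) ->
  (forall u, u \in V -> w < u /\ col (u - w) = c) -> v \in V -> uniq V' ->
  (forall u, u \in V' -> u \in V) -> 1 < size V' ->
  (forall u, u \in V' -> v < u /\ col (u - v) = c) -> False.
Proof.
move=> Hws HVN Hw Hv HV' HV'V HsV' HV'c.
have [Hwv Hcv] := Hw v Hv.
have HvN := HVN v Hv.
have [u [Hu Huv]] : exists u, u \in V' /\ u - v <> v - w.
  case: V' HV' HV'V HsV' HV'c => [|u1 [|u2 V'']] //= HV' HV'V HsV' HV'c.
  case: (eqVneq (u1 - v) (v - w)) => E; last first.
    by exists u1; split; [exact: mem_head | exact/eqP].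
  exists u2; split; first by rewrite !inE eqxx orbT.
  move: HV'; rewrite inE negb_or => /andP [/andP [Hne _] _].
  have Hu2 : u2 \in [:: u1, u2 & V''] by rewrite !inE eqxx orbT.
  have := HV'c u1 (mem_head _ _); have := HV'c u2 Hu2.
  move/eqP: Hne; lia.
have [Hvu Hcu] := HV'c u Hu.
have [Hwu Hcuw] := Hw u (HV'V u Hu).
have HuN := HVN u (HV'V u Hu).
apply: (Hws (v - w) (u - v)); try lia.
have -> : v - w + (u - v) = u - w by lia.
lia.
Qed.

Lemma chain m N (col : nat -> nat) :
  (forall x, 1 <= x <= N -> 1 <= col x <= m) ->
  (forall x y, 1 <= x <= N -> 1 <= y <= N -> x <> y -> col x = col y -> x + y <= N ->
     col (x + y) <> col x) ->
  forall j U V, uniq U -> (forall c, c \in U -> 1 <= c <= m) -> uniq V ->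
  (forall u, u \in V -> u <= N) ->
  (forall c, c \in U -> exists w, forall u, u \in V -> w < u /\ col (u - w) = c) ->
  m <= size U + j -> m * hh m j + 1 < size V -> False.
Proof.
move=> Hcol Hws; elim=> [|j IH] U V HU HUr HV HVN Hinv Hsz Hs;
  have [c [V' [v [[Hc HV' HV'V HsV' Hv] HV'c]]]] := @chain_step m N col V _ Hcol HV HVN Hs;
  case: (boolP (c \in U)) => HcU.
- have [w Hw] := Hinv c HcU.
  have H2 : 1 < size V' by have := hh_pos m 0; lia.
  exact: (@repeat_contra N col c w v V V' Hws HVN Hw Hv HV' HV'V H2 HV'c).
- have : size (c :: U) <= size (iota 1 m).
    apply: uniq_leq_size; first by rewrite /= HcU HU.
    move=> x; rewrite inE mem_iota => /orP [/eqP ->|/HUr]; lia.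
  rewrite size_iota /= => H; move: Hsz; rewrite addn0 leqNgt; by rewrite H.
- have [w Hw] := Hinv c HcU.
  have H2 : 1 < size V' by have := hh_pos m j.+1; lia.
  exact: (@repeat_contra N col c w v V V' Hws HVN Hw Hv HV' HV'V H2 HV'c).
- apply: (IH (c :: U) V') => //.
  + by rewrite /= HcU HU.
  + move=> x; rewrite inE => /orP [/eqP ->|/HUr] //.
  + by move=> u /HV'V /HVN.
  + move=> x; rewrite inE => /orP [/eqP ->|/Hinv [w Hw]].
      by exists v.
    by exists w => u /HV'V /Hw.
  + by rewrite /= addSnnS.
Qed.

Lemma ws_bound m N (col : nat -> nat) :
  (forall x, 1 <= x <= N -> 1 <= col x <= m) ->
  (forall x y, 1 <= x <= N -> 1 <= y <= N -> x <> y -> col x = col y -> x + y <= N ->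
     col (x + y) <> col x) -> N <= m * hh m m.
Proof.
move=> Hc Hw; rewrite leqNgt; apply/negP => Hlt.
have H1 : uniq (iota 0 N.+1) by exact: iota_uniq.
have H2 : forall u, u \in iota 0 N.+1 -> u <= N by move=> u; rewrite mem_iota; lia.
have H3 : m * hh m m + 1 < size (iota 0 N.+1) by rewrite size_iota; lia.
have H4 : m <= size ([::] : seq nat) + m by [].
by apply: (@chain m N col Hc Hw m [::] (iota 0 N.+1) _ _ H1 H2 _ H4 H3).
Qed.

Lemma WS_bound b m a g : WS_template b m a g -> a <= m * hh m m.
Proof.
case=> [[_ _ _ _ Hc] [Hi _ _ _]].
have := @ws_bound m (a + b) g Hc Hi; lia.
Qed.


Lemma piab_spec A b w : b < A -> b < w ->
  exists t, w = A * t + piab A b w /\ b < piab A b w <= A + b.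
Proof.
move=> hA hw; rewrite /piab.
have E := divn_eq w A.
have Hm : w %% A < A by rewrite ltn_mod; lia.
move: E Hm; set r := w %% A => E Hm.
case: (leqP r b) => h.
  case E2: (w %/ A) E => [|q] E.
    lia.
  exists q; rewrite mulSn in E; rewrite (mulnC A q); lia.
exists (w %/ A); rewrite (mulnC A); lia.
Qed.

Lemma uniq_rep a b q1 r1 q2 r2 : a * q1 + r1 = a * q2 + r2 ->
  b < r1 <= a + b -> b < r2 <= a + b -> q1 = q2 /\ r1 = r2.
Proof.
move=> E h1 h2.
case: (ltngtP q1 q2) => h.
- have : a * q1.+1 <= a * q2 by rewrite leq_mul2l h orbT.
  rewrite mulnS; lia.
- have : a * q2.+1 <= a * q1 by rewrite leq_mul2l h orbT.
  rewrite mulnS; lia.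
- subst; lia.
Qed.

Definition rz a b z := if z <= b then z else piab a b z.
Definition qz a b z := (z - rz a b z) %/ a.

Lemma rq_spec a b z : 0 < a -> b < a -> 1 <= z ->
  [/\ z = a * qz a b z + rz a b z, 1 <= rz a b z <= a + b,
      (b < z -> b < rz a b z) & (z <= b -> rz a b z = z /\ qz a b z = 0)].
Proof.
move=> ha hb hz; rewrite /qz /rz; case: (leqP z b) => h /=.
  by rewrite subnn div0n muln0; split => //; lia.
have [t [E H]] := @piab_spec a b z hb h.
have -> : z - piab a b z = a * t by lia.
rewrite mulKn //; split => //; lia.
Qed.


Lemma core a b n g X Y Z d :
  WS_template b n a g -> 1 <= X -> 1 <= Y -> 1 <= Z -> X + Y = Z + a * d ->
  (Z <= b -> d = 0) -> (X <> Y \/ (b < X /\ b < Y)) ->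
  g (rz a b X) = g (rz a b Y) -> g (rz a b Z) = g (rz a b X) ->
  g (rz a b X) = n /\ qz a b Z + d = (qz a b X + qz a b Y).+1.
Proof.
move=> [[ha hb hn hab Hc] [Hi Hii Hiii Hiv]] hX hY hZ E HZd HXY Hg HgZ.
have [EX /andP[rX1 rX2] rXb rXs] := @rq_spec a b X ha hab hX.
have [EY /andP[rY1 rY2] rYb rYs] := @rq_spec a b Y ha hab hY.
have [EZ /andP[rZ1 rZ2] rZb rZs] := @rq_spec a b Z ha hab hZ.
move: EX rX1 rX2 rXb rXs EY rY1 rY2 rYb rYs EZ rZ1 rZ2 rZb rZs Hg HgZ.
set rX := rz a b X; set rY := rz a b Y; set rZ := rz a b Z.
set qX := qz a b X; set qY := qz a b Y; set qZ := qz a b Z.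
move=> EX rX1 rX2 rXb rXs EY rY1 rY2 rYb rYs EZ rZ1 rZ2 rZb rZs Hg HgZ.
have /andP[gX1 gX2] : 1 <= g rX <= n by apply: Hc; rewrite rX1 rX2.
have /andP[gY1 gY2] : 1 <= g rY <= n by apply: Hc; rewrite rY1 rY2.
have XbX : X <= b -> rX = X by move=> h; case: (rXs h).
have YbY : Y <= b -> rY = Y by move=> h; case: (rYs h).
have hXb : rX <= b -> X <= b by move=> h; rewrite leqNgt; apply/negP => /rXb; lia.
have hYb : rY <= b -> Y <= b by move=> h; rewrite leqNgt; apply/negP => /rYb; lia.
have Zb : Z <= b -> X + Y = Z.
  move=> h; have := HZd h => d0; rewrite E d0; lia.
case: (leqP (rX + rY) (a + b)) => hs1.
  have hrZ : rZ = rX + rY.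
    case: (leqP Z b) => hZb.
      have := Zb hZb => EXY; case: (rZs hZb) => -> _.
      have hXb' : X <= b by lia.
      have hYb' : Y <= b by lia.
      rewrite XbX // YbY //; lia.
    have hbZ := rZb hZb.
    have hsb : b < rX + rY.
      rewrite ltnNge; apply/negP => hsb.
      have hXb' := hXb ltac:(lia). have hYb' := hYb ltac:(lia).
      have := XbX hXb'; have := YbY hYb'; lia.
    have Eq : a * (qX + qY) + (rX + rY) = a * (qZ + d) + rZ by rewrite !mulnDr; lia.
    by have [_ ->] := @uniq_rep _ b _ _ _ _ Eq ltac:(lia) ltac:(lia).
  exfalso.
  case: (eqVneq rX rY) => hxy.
    have hbX : b < rX.
      rewrite ltnNge; apply/negP => h.
      have hx := hXb h. have hy : Y <= b by apply: hYb; rewrite -hxy.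
      have := XbX hx; have := YbY hy => e1 e2.
      case: HXY => [|[]]; lia.
    apply: (Hii rX rY); try lia; by rewrite -?hrZ -?HgZ.
  apply: (Hi rX rY); try lia; by rewrite -?hrZ -?HgZ.
have Zb' : b < Z.
  rewrite ltnNge; apply/negP => hZb.
  have := Zb hZb => EXY.
  have hXb' : X <= b by lia.
  have hYb' : Y <= b by lia.
  have := XbX hXb'; have := YbY hYb'; lia.
have hbZ := rZb Zb'.
have hsb : b < rX + rY by lia.
have [t [Et Ht]] := @piab_spec a b (rX + rY) hab hsb.
case: (leqP (rX + rY) (2 * a + b)) => hs2.
  have Eq : a * (qX + qY + 1) + (rX + rY - a) = a * (qZ + d) + rZ by rewrite !mulnDr; lia.
  have [e1 e2] := @uniq_rep _ b _ _ _ _ Eq ltac:(lia) ltac:(lia).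
  case: (ltnP (g rX) n) => hgn; last first.
    split; [lia | rewrite -e1; lia].
  have Eq2 : a * t + piab a b (rX + rY) = a * 1 + (rX + rY - a) by clear -Et hs1; lia.
  have [_ e3] := @uniq_rep _ b _ _ _ _ Eq2 ltac:(clear -Ht; lia) ltac:(clear -hs1 hs2; lia).
  exfalso; apply: (Hiv rX rY) => //; try lia.
  by rewrite e3 e2 HgZ.
have Eq : a * (qX + qY + 2) + (rX + rY - 2 * a) = a * (qZ + d) + rZ by rewrite !mulnDr; lia.
have [e1 e2] := @uniq_rep _ b _ _ _ _ Eq ltac:(lia) ltac:(lia).
exfalso.
case: (ltnP (g rX) n) => hgn.
  have Eq2 : a * t + piab a b (rX + rY) = a * 2 + (rX + rY - 2 * a) by clear -Et hs2; lia.
  have [_ e3] := @uniq_rep _ b _ _ _ _ Eq2 ltac:(clear -Ht; lia) ltac:(clear -hs2 rX2 rY2 hab; lia).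
  apply: (Hiv rX rY) => //; try lia.
  by rewrite e3 e2 HgZ.
apply: (Hiii rX rY); try (clear -rX1 rX2 rY1 rY2 hs2 Hg hgn gX2; lia).
rewrite e2 HgZ; lia.
Qed.


Definition Fc a b n (g f : nat -> nat) z :=
  if g (rz a b z) < n then g (rz a b z) else n.-1 + f (qz a b z).+1.

Lemma Fc_eq n gx gy fx fy : 1 <= gx <= n -> 1 <= gy <= n -> 1 <= fx -> 1 <= fy ->
  (if gx < n then gx else n.-1 + fx) = (if gy < n then gy else n.-1 + fy) ->
  gx = gy /\ (gx = n -> fx = fy).
Proof. case: (ltnP gx n); case: (ltnP gy n); lia. Qed.

Lemma qbound a b p z : 0 < a -> b < a -> 0 < p -> 1 <= z <= p * a + b -> qz a b z < p.
Proof.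
move=> ha hb hp /andP [z1 z2].
have [E /andP [r1 r2] rb rs] := @rq_spec a b z ha hb z1.
case: (leqP z b) => hz; first by case: (rs hz) => _ ->.
have := rb hz => hr.
have : a * qz a b z < a * p by lia.
by rewrite ltn_pmul2l.
Qed.

Lemma final_core a b n k p g f X Y Z d :
  WS_template b n a g -> S_template (k + 1) p f -> 0 < p ->
  1 <= X <= p * a + b -> 1 <= Y <= p * a + b -> 1 <= Z <= p * a + b ->
  X + Y = Z + a * d -> (Z <= b -> d = 0) -> (X <> Y \/ (b < X /\ b < Y)) ->
  Fc a b n g f X = Fc a b n g f Y -> Fc a b n g f Z = Fc a b n g f X ->
  [/\ g (rz a b X) = n, f (qz a b Z).+1 = f (qz a b X).+1,
      f (qz a b X).+1 = f (qz a b Y).+1, qz a b Z + d = (qz a b X + qz a b Y).+1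
    & (qz a b X < p /\ qz a b Y < p /\ qz a b Z < p)].
Proof.
move=> HW HS hp /andP [X1 X2] /andP [Y1 Y2] /andP [Z1 Z2] E HZd HXY HFXY HFZ.
have HW' := HW; move: HW' => [[ha hb hn hab Hc] _].
case: HS => [Hf _ _].
have qX := @qbound a b p X ha hab hp ltac:(lia).
have qY := @qbound a b p Y ha hab hp ltac:(lia).
have qZ := @qbound a b p Z ha hab hp ltac:(lia).
have [_ /andP [rX1 rX2] _ _] := @rq_spec a b X ha hab X1.
have [_ /andP [rY1 rY2] _ _] := @rq_spec a b Y ha hab Y1.
have [_ /andP [rZ1 rZ2] _ _] := @rq_spec a b Z ha hab Z1.
have gX : 1 <= g (rz a b X) <= n by apply: Hc; rewrite rX1 rX2.
have gY : 1 <= g (rz a b Y) <= n by apply: Hc; rewrite rY1 rY2.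
have gZ : 1 <= g (rz a b Z) <= n by apply: Hc; rewrite rZ1 rZ2.
have fX : 1 <= f (qz a b X).+1 <= k + 1 by apply: Hf; lia.
have fY : 1 <= f (qz a b Y).+1 <= k + 1 by apply: Hf; lia.
have fZ : 1 <= f (qz a b Z).+1 <= k + 1 by apply: Hf; lia.
have [e1 e2] := @Fc_eq n (g (rz a b X)) (g (rz a b Y)) (f (qz a b X).+1) (f (qz a b Y).+1) gX gY ltac:(lia) ltac:(lia) HFXY.
have [e3 e4] := @Fc_eq n (g (rz a b Z)) (g (rz a b X)) (f (qz a b Z).+1) (f (qz a b X).+1) gZ gX ltac:(lia) ltac:(lia) HFZ.
have [e5 e6] := @core a b n g X Y Z d HW X1 Y1 Z1 E HZd HXY e1 e3.
split => //.
- by apply: e4; rewrite e3.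
- exact: e2.
Qed.


Lemma construct a b n k p g f : WS_template b n a g -> S_template (k + 1) p f -> 0 < p ->
  WS_template b (n + k) (p * a) (Fc a b n g f).
Proof.
move=> HW HS hp.
have HW' := HW; move: HW' => [[ha hb hn hab Hc] _].
have HS' := HS; move: HS' => [Hf Hsf Hmod].
have hpa : a <= p * a by rewrite leq_pmull.
have hcol : forall x, 1 <= x <= p * a + b -> 1 <= Fc a b n g f x <= n + k.
  move=> x /andP [x1 x2].
  have qx := @qbound a b p x ha hab hp ltac:(lia).
  have [_ /andP [r1 r2] _ _] := @rq_spec a b x ha hab x1.
  have gx : 1 <= g (rz a b x) <= n by apply: Hc; rewrite r1 r2.
  have fx : 1 <= f (qz a b x).+1 <= k + 1 by apply: Hf; lia.
  rewrite /Fc; case: ifP; lia.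
split; first split => //; try lia.
split.
- move=> x y hx hy hxy HF hs HF2.
  have [_ e2 e3 e4 [hqx [hqy hqz]]] := @final_core a b n k p g f x y (x + y) 0 HW HS hp hx hy
     ltac:(lia) ltac:(lia) ltac:(lia) (or_introl hxy) HF HF2.
  have H := Hsf (qz a b x).+1 (qz a b y).+1 ltac:(lia) ltac:(lia) e3 ltac:(lia).
  apply: H.
  have -> : (qz a b x).+1 + (qz a b y).+1 = (qz a b (x + y)).+1 by lia.
  by rewrite e2.
- move=> x y hx hy HF hs HF2.
  have [_ e2 e3 e4 [hqx [hqy hqz]]] := @final_core a b n k p g f x y (x + y) 0 HW HS hp
     ltac:(lia) ltac:(lia) ltac:(lia) ltac:(lia) ltac:(lia) (or_intror (conj (proj1 (andP hx)) (proj1 (andP hy)))) HF HF2.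
  have H := Hsf (qz a b x).+1 (qz a b y).+1 ltac:(lia) ltac:(lia) e3 ltac:(lia).
  apply: H.
  have -> : (qz a b x).+1 + (qz a b y).+1 = (qz a b (x + y)).+1 by lia.
  by rewrite e2.
- move=> x y hx hy HFx HFy hs HF2.
  have e : a * (2 * p) = 2 * (p * a) by rewrite mulnCA (mulnC a p).
  have [_ e2 e3 e4 [hqx [hqy hqz]]] := @final_core a b n k p g f x y (x + y - 2 * (p * a)) (2 * p) HW HS hp
     hx hy ltac:(lia) ltac:(lia) ltac:(lia) ltac:(lia) ltac:(congruence) ltac:(congruence).
  lia.
- move=> x y hx hy HF HFk hs HF2.
  have hb' : b < p * a by lia.
  have [t [Et /andP [Z1 Z2]]] := @piab_spec (p * a) b (x + y) hb' ltac:(lia).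
  move: HF2 Et Z1 Z2; set Z := piab (p * a) b (x + y) => HF2 Et Z1 Z2.
  have e : p * a * t = a * (p * t) by rewrite [RHS]mulnCA mulnA.
  have hxy : x <> y \/ b < x /\ b < y.
    case: (eqVneq x y) => [exy|nxy]; [right; lia | left; exact/eqP].
  have [e1 e2 e3 e4 [hqx [hqy hqz]]] := @final_core a b n k p g f x y Z (p * t) HW HS hp
     hx hy ltac:(lia) ltac:(lia) ltac:(lia) hxy HF HF2.
  have ht : t = 1.
    case: t e e4 Et => [|[|t]] e e4 Et; first (by rewrite muln0 in Et; lia); first by [].
    have : p * 2 <= p * t.+2 by rewrite leq_mul2l; lia.
    lia.
  subst t; rewrite muln1 in e4.
  have hfx : f (qz a b x).+1 < k + 1.
    move: HFk; rewrite /Fc e1 ltnn; lia.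
  have H := Hmod (qz a b x).+1 (qz a b y).+1 ltac:(lia) ltac:(lia) e3 hfx ltac:(lia).
  apply: H.
  have -> : (qz a b x).+1 + (qz a b y).+1 - p = (qz a b Z).+1 by lia.
  by rewrite e2.
Qed.

Theorem corollary3p22 (n k : nat) :
  0 < n -> 0 < k -> S_plus (k + 1) * WS_plus n <= WS_plus (n + k).
Proof.
move=> hn hk.
set B := (n + k) * hh (n + k) (n + k).
have Hb : forall b', WS_plus_b b' (n + k) <= B.
  move=> b'; case: (greatest_0 (fun a => exists f, WS_template b' (n + k) a f)) => [E|[[f Hf] _]].
    by rewrite /WS_plus_b E.
  exact: (@WS_bound b' (n + k) _ f Hf).
case: (greatest_0 (fun p => exists f, S_template (k + 1) p f)) => [E|[[f Hf] _]].
  by rewrite /S_plus E.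
case: (greatest_0 (fun v => exists2 b, 0 < b & v = WS_plus_b b n)) => [E|[[b hb Ev] _]].
  by rewrite /WS_plus E muln0.
rewrite -/(S_plus (k + 1)) in Hf.
rewrite -/(WS_plus n) in Ev.
case: (posnP (S_plus (k + 1))) => [->//|hp].
case: (posnP (WS_plus n)) => [->|hv]; first by rewrite muln0.
case: (greatest_0 (fun a => exists f, WS_template b n a f)) => [E|[[g Hg] _]].
  by rewrite -/(WS_plus_b b n) -Ev in E; lia.
rewrite -/(WS_plus_b b n) -Ev in Hg.
have HT := @construct (WS_plus n) b n k (S_plus (k + 1)) g f Hg Hf hp.
apply: (@leq_trans (WS_plus_b b (n + k))).
  apply: (@greatest_ge _ B); first by exists (Fc (WS_plus n) b n g f).
  by move=> q [f' Hf']; exact: (@WS_bound b (n + k) q f' Hf').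
apply: (@greatest_ge _ B); first by exists b.
by move=> q [b' _ ->].
Qed.
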